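(* Let $F$ be a face of $V^c_O$ and let $\lambda\ne\mu$ be elements of $\Upsilon_1$ with $F\subseteq K_\lambda\cap K_\mu$. Then $\mathrm{supp}(\lambda)$ and $\mathrm{supp}(\mu)$ are consistent in their orientations: there is no oriented edge $e$ with $e\in\mathrm{supp}(\lambda)$ and $\bar e\in\mathrm{supp}(\mu)$.
   Context: $G=(V,E)$ is a finite connected graph; each edge gives oriented edges $e,\bar e$. Real $1$-cochains are $x$ on oriented edges with $x_{\bar e}=-x_e$, $\langle x,y\rangle=\sum_{e\in E}x_ey_e$, $q(x)=\langle x,x\rangle$. For $f:V\to\mathbb R$, $d(f)(e)=f(\text{head}(e))-f(\text{tail}(e))$; $K=d(\mathbb R^V)$ and $L=d(\mathbb Z^V)$. $V^c_O=\{x\in K: q(x)\le q(x-\mu)\ \forall\mu\in L\}$. $\mathrm{supp}(x)=\{e: x_e>0\}$. $\chi_C$ is the characteristic function of $C$; if $G[C]$ has $k$ and $G[V\setminus C]$ has $r$ connected components, $\kappa(C,V\setminus C)=k+r-1$, and $\Upsilon_1=\{d(\chi_C): \kappa(C,V\setminus C)=1\}$. For $\lambda\in\Upsilon_1$, $K_\lambda=\{x\in K: 2\langle x,\lambda\rangle=q(\lambda)\}$. *)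

(* Defs.v *)
From HB Require Import structures.
From mathcomp Require Import all_boot all_order all_algebra.
Set Implicit Arguments. Unset Strict Implicit. Unset Printing Implicit Defensive.
Import Order.TTheory GRing.Theory Num.Theory.
Local Open Scope ring_scope.

(* A finite (multi)graph: vertices V, edges E, each edge e carries a fixed
   reference orientation src e -> tgt e.  The oriented edges are E * bool:
   (e, true) is e with its reference orientation, (e, false) is \bar e. *)

Section Graph.
Variables (V E : finType) (src tgt : E -> V).

Definition adj : rel V := fun u v =>
  [exists e, ((src e == u) && (tgt e == v)) || ((src e == v) && (tgt e == u))].

Definition graph_connected : Prop := forall u v : V, connect adj u v.

Definition adjIn (C : {set V}) : rel V := fun u v =>
  [&& u \in C, v \in C & adj u v].

Definition ncomp (C : {set V}) : nat :=
  #| [set [set w in C | connect (adjIn C) u w] | u in C] |.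

Definition kappa (C : {set V}) : int := (ncomp C + ncomp (~: C))%:Z - 1.

Variable R : realFieldType.

(* real 1-cochains, given by their values on the reference orientations;
   the value on \bar e is minus the value on e *)
Definition cochain := E -> R.

Definition oval (x : cochain) (o : E * bool) : R :=
  if o.2 then x o.1 else - x o.1.

Definition orev (o : E * bool) : E * bool := (o.1, ~~ o.2).

Definition inner (x y : cochain) : R := \sum_(e : E) x e * y e.
Definition qf (x : cochain) : R := inner x x.

Definition dcob (f : V -> R) : cochain := fun e => f (tgt e) - f (src e).

Definition inK (x : cochain) : Prop := exists f : V -> R, x = dcob f.
Definition inL (x : cochain) : Prop :=
  exists f : V -> int, x = dcob (fun v => (f v)%:~R).

Definition VcO (x : cochain) : Prop :=
  inK x /\ forall mu : cochain, inL mu -> qf x <= qf (fun e => x e - mu e).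

Definition supp (x : cochain) (o : E * bool) : Prop := 0 < oval x o.

Definition chi (C : {set V}) : V -> R := fun v => if v \in C then 1 else 0.

Definition Upsilon1 (lam : cochain) : Prop :=
  exists C : {set V}, kappa C = 1 /\ lam = dcob (chi C).

Definition Klam (lam x : cochain) : Prop :=
  inK x /\ 2 * inner x lam = qf lam.

Definition is_face (F : cochain -> Prop) : Prop :=
  (exists x, F x) /\
  exists (a : cochain) (b : R),
    (forall x, VcO x -> inner a x <= b) /\
    (forall x, F x <-> (VcO x /\ inner a x = b)).

End Graph.

(* Main.v *)
Require Import Defs.
From Stdlib Require Import FunctionalExtensionality.
From HB Require Import structures.
From mathcomp Require Import all_boot all_order all_algebra.
Import Order.TTheory GRing.Theory Num.Theory.
Local Open Scope ring_scope.

Definition bf (R : realFieldType) (b : bool) : R := if b then 1 else 0.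

Lemma edge_le (R : realFieldType) (ph pt rh rt : bool) :
  let a := bf R ph - bf R pt in let b := bf R rh - bf R rt in
  let c := bf R (ph && rh) - bf R (pt && rt) in let d := bf R (ph || rh) - bf R (pt || rt) in
  [/\ c + d = a + b, c*c + d*d <= a*a+b*b & (a*b < 0 -> c*c+d*d < a*a+b*b)].
Proof.
case: ph pt rh rt => [] [] [] [] /=; rewrite /bf ?subrr ?subr0 ?sub0r ?mulr0 ?mul0r ?mulr1 ?mul1r ?mulrN ?mulNr ?opprK ?addr0 ?add0r ?subrr ?addNr;
 split=> //; rewrite ?lexx ?ltxx ?ler01 ?ltr01 ?oppr_lt0 ?ltr01 ?lerDl ?ler01 //.
all: try (by move=> h; exfalso; move: h; rewrite ?oppr_lt0 ?ltr10 ?ltr01).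
all: rewrite ?mulr1; try (by rewrite ltr10); try move=> _; rewrite ?ltr_pwDl ?ler_wpDl ?ltr01 ?ler01 ?ltr10 //.
Qed.

Lemma chiE (V : finType) (R : realFieldType) (C : {set V}) v :
  chi R C v = bf R (v \in C).
Proof. by []. Qed.

Lemma inL_chi (V E : finType) (src tgt : E -> V) (R : realFieldType) (C : {set V}) :
  inL src tgt (dcob src tgt (chi R C)).
Proof.
exists (fun v => if v \in C then 1%Z else 0%Z).
congr (dcob _ _); apply: functional_extensionality => v.
by rewrite /chi; case: (_ \in C).
Qed.

Lemma vor (V E : finType) (src tgt : E -> V) (R : realFieldType) (x m : cochain E R) :
  VcO src tgt x -> inL src tgt m -> 2 * inner x m <= qf m.
Proof.
move=> [_ H] /H; rewrite /qf /inner.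
have -> : \sum_e (x e - m e) * (x e - m e) =
   \sum_e (x e * x e) - 2 * \sum_e (x e * m e) + \sum_e (m e * m e).
  rewrite mulr_sumr -sumrB -big_split /=; apply: eq_bigr => e _.
  by rewrite -!expr2 sqrrB mulr_natl.
by rewrite -addrA lerDl addrC subr_ge0.
Qed.

Theorem mainTheorem17 (V E : finType) (src tgt : E -> V) (R : realFieldType)
  (Hconn : graph_connected src tgt)
  (F : cochain E R -> Prop) (HF : is_face src tgt F)
  (lam mu : cochain E R)
  (Hlam : Upsilon1 src tgt lam) (Hmu : Upsilon1 src tgt mu) (Hne : lam <> mu)
  (HFsub : forall x, F x -> Klam src tgt lam x /\ Klam src tgt mu x) :
  ~ (exists o : E * bool, supp lam o /\ supp mu (orev o)).
Proof.
move=> [[e0 b0] [Hs1 Hs2]].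
have Hbad : lam e0 * mu e0 < 0.
  move: Hs1 Hs2; rewrite /supp /oval /orev /=; case: b0 => /= h1 h2.
    by rewrite pmulr_rlt0 // -oppr_gt0.
  by rewrite mulrC pmulr_rlt0 // -oppr_gt0.
case: HF => [[x Fx] [a [b [_ Hab]]]].
have Vx : VcO src tgt x by case: (Hab x) => /(_ Fx) [].
case: (HFsub x Fx) => [[_ Kl] [_ Km]].
case: Hlam => C [_ defl]; case: Hmu => D [_ defm].
set al := dcob src tgt (chi R (C :&: D)).
set be := dcob src tgt (chi R (C :|: D)).
have va := @vor V E src tgt R x _ Vx (@inL_chi V E src tgt R (C :&: D)).
have vb := @vor V E src tgt R x _ Vx (@inL_chi V E src tgt R (C :|: D)).
have Hsum : inner x al + inner x be = inner x lam + inner x mu.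
  rewrite /inner -!big_split /=; apply: eq_bigr => e _.
  rewrite -!mulrDr; congr (_ * _).
  rewrite /al /be defl defm /dcob !chiE !in_setI !in_setU.
  by case: (edge_le R (tgt e \in C) (src e \in C) (tgt e \in D) (src e \in D)).
have Hlt : qf al + qf be < qf lam + qf mu.
  rewrite /qf -!big_split /= (bigD1 e0) //= [X in _ < X](bigD1 e0) //=.
  apply: ltr_leD.
    move: Hbad; rewrite /al /be defl defm /dcob !chiE !in_setI !in_setU.
    by case: (edge_le R (tgt e0 \in C) (src e0 \in C) (tgt e0 \in D) (src e0 \in D)).
  apply: ler_sum => e _.
  rewrite /al /be defl defm /dcob !chiE !in_setI !in_setU.
  by case: (edge_le R (tgt e \in C) (src e \in C) (tgt e \in D) (src e \in D)).
have : qf lam + qf mu <= qf al + qf be.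
  by rewrite -Kl -Km -mulrDr -Hsum mulrDr lerD.
by rewrite leNgt Hlt.
Qed.
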